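(* Assume the setting below with general missingness: the $M_i(1),M_i(0)\in\{0,1\}$ are arbitrary constants whose values may depend on the potential outcomes in an arbitrary way. Fix $\boldsymbol\delta=(\delta_1,\dots,\delta_n)^\intercal\in\mathbb R^n$ and define $\boldsymbol Y^{\texttt{g}}_{\boldsymbol Z,\boldsymbol\delta}(0)\in\overline{\mathbb R}^n$ by $$Y^{\texttt{g}}_{\boldsymbol Z,\boldsymbol\delta,i}(0)=\begin{cases}Y_i-\delta_i,& Z_i=1,\ M_i=1,\\ -\infty,& Z_i=1,\ M_i=0,\\ Y_i,& Z_i=0,\ M_i=1,\\ +\infty,& Z_i=0,\ M_i=0,\end{cases}\qquad 1\le i\le n.$$ Then $p^{\texttt{g}}_{\boldsymbol Z,\boldsymbol\delta}:=G_{\mathrm R,\phi}\big(t_{\mathrm R,\phi}(\boldsymbol Z,\boldsymbol Y^{\texttt{g}}_{\boldsymbol Z,\boldsymbol\delta}(0))\big)$ is a valid p-value for the sharp null $H_{\boldsymbol\delta}:\boldsymbol\tau=\boldsymbol\delta$; that is, if $H_{\boldsymbol\delta}$ holds then $\mathbb P(p^{\texttt{g}}_{\boldsymbol Z,\boldsymbol\delta}\le\alpha)\le\alpha$ for every $\alpha\in(0,1)$.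
   Context: There are $n$ units. Unit $i$ has fixed potential outcomes $Y_i^\star(0),Y_i^\star(1)\in\mathbb R$ and fixed potential missingness indicators $M_i(0),M_i(1)\in\{0,1\}$; $\tau_i=Y_i^\star(1)-Y_i^\star(0)$ and $\boldsymbol\tau=(\tau_1,\dots,\tau_n)^\intercal$. The assignment $\boldsymbol Z=(Z_1,\dots,Z_n)^\intercal$ is drawn from a completely randomized experiment (CRE): for fixed positive integers $n_1,n_0$ with $n_1+n_0=n$, $\boldsymbol Z$ is uniform over the $\binom{n}{n_1}$ vectors in $\{0,1\}^n$ with exactly $n_1$ ones, independently of all potential outcomes and potential missingness indicators; probabilities are over $\boldsymbol Z$. The observed missingness indicator is $M_i=Z_iM_i(1)+(1-Z_i)M_i(0)$. The realized outcome $Z_iY_i^\star(1)+(1-Z_i)Y_i^\star(0)$ is observed, and denoted $Y_i$, only when $M_i=1$. Test statistics: let $\overline{\mathbb R}=\mathbb R\cup\{\pm\infty\}$. For $1\le i,j\le n$ and $y,y'\in\overline{\mathbb R}$ let $\psi_{i,j}(y,y')=\mathbf 1\{y>y'\}+\mathbf 1\{y=y'\}\mathbf 1\{i\ge j\}$, and for $\boldsymbol y\in\overline{\mathbb R}^n$ let $\mathrm{rank}_i(\boldsymbol y)=\sum_{j=1}^n\psi_{i,j}(y_i,y_j)$. Let $\phi$ be a fixed nondecreasing real function on the nonnegative integers. For $\boldsymbol z\in\{0,1\}^n$, $\boldsymbol y\in\overline{\mathbb R}^n$, $t_{\mathrm R,\phi}(\boldsymbol z,\boldsymbol y)$ denotes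 either the rank-sum statistic $\sum_{i=1}^n z_i\phi(\mathrm{rank}_i(\boldsymbol y))$ or the Mann–Whitney-type statistic $\sum_{i=1}^n z_i\phi\big(\sum_{j=1}^n(1-z_j)\psi_{i,j}(y_i,y_j)\big)$; the result holds for either choice. $G_{\mathrm R,\phi}(c)=\mathbb P(t_{\mathrm R,\phi}(\boldsymbol A,\boldsymbol y_0)\ge c)$, where $\boldsymbol A$ is drawn from the CRE and $\boldsymbol y_0\in\mathbb R^n$ is any fixed vector (this does not depend on $\boldsymbol y_0$). *)

(* Defs.v *)
From HB Require Import structures.
From mathcomp Require Import all_boot all_order all_algebra.
From mathcomp Require Import reals constructive_ereal.
Set Implicit Arguments. Unset Strict Implicit. Unset Printing Implicit Defensive.
Import Order.TTheory GRing.Theory Num.Theory.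
Local Open Scope ring_scope.

Section Defs.
Variable R : realType.
Variable n : nat.

(* An assignment Z is represented by the set of treated units {i | Z_i = 1}. *)

(* Probability of the event E under the CRE with n1 treated units:
   uniform over the 'C(n, n1) subsets of 'I_n of size n1. *)
Definition cre_prob (n1 : nat) (E : pred {set 'I_n}) : R :=
  (#|[set A : {set 'I_n} | (#|A| == n1) && E A]|%:R) / ('C(n, n1)%:R).

Definition psi (i j : 'I_n) (y y' : \bar R) : nat :=
  ((y' < y)%E : nat) + (((y == y') && (j <= i)%N) : nat).

Definition rank (y : 'I_n -> \bar R) (i : 'I_n) : nat :=
  \sum_(j < n) psi i j (y i) (y j).

(* The statistic t_{R,phi}: if mw = false it is the rank-sum statistic,
   if mw = true it is the Mann--Whitney-type statistic. *)
Definition t_stat (mw : bool) (phi : nat -> R) (z : {set 'I_n})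
    (y : 'I_n -> \bar R) : R :=
  if mw then
    \sum_(i < n | i \in z) phi (\sum_(j < n | j \notin z) psi i j (y i) (y j))
  else \sum_(i < n | i \in z) phi (rank y i).

Definition G_stat (mw : bool) (phi : nat -> R) (n1 : nat) (y0 : 'I_n -> R)
    (c : R) : R :=
  cre_prob n1 (fun A => c <= t_stat mw phi A (fun i => (y0 i)%:E)).

Definition Yg0 (Y1 Y0 : 'I_n -> R) (M1 M0 : 'I_n -> bool) (delta : 'I_n -> R)
    (z : {set 'I_n}) (i : 'I_n) : \bar R :=
  if i \in z then (if M1 i then (Y1 i - delta i)%:E else -oo%E)
  else (if M0 i then (Y0 i)%:E else +oo%E).

Definition pval_g (mw : bool) (phi : nat -> R) (n1 : nat) (y0 : 'I_n -> R)
    (Y1 Y0 : 'I_n -> R) (M1 M0 : 'I_n -> bool) (delta : 'I_n -> R)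
    (z : {set 'I_n}) : R :=
  G_stat mw phi n1 y0 (t_stat mw phi z (Yg0 Y1 Y0 M1 M0 delta z)).

End Defs.

(* Main.v *)
Require Import Defs.
From HB Require Import structures.
From mathcomp Require Import all_boot all_order all_algebra all_fingroup.
From mathcomp Require Import reals constructive_ereal.
From mathcomp Require Import zify.
Import Order.TTheory GRing.Theory Num.Theory.
Local Open Scope ring_scope.
Set Implicit Arguments. Unset Strict Implicit. Unset Printing Implicit Defensive.

Section Aux.
Variable R : realType.
Variable n : nat.
Implicit Types (y : 'I_n -> \bar R).

Definition lek y (j i : 'I_n) : bool :=
  (y j < y i)%E || ((y j == y i) && (j <= i)%N).

Lemma psi_lek y i j : psi i j (y i) (y j) = lek y j i.
Proof.
rewrite /psi /lek; case: (ltgtP (y j) (y i)) => h //=.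
Qed.

Lemma lek_refl y i : lek y i i.
Proof. by rewrite /lek ltxx eqxx leqnn. Qed.

Lemma lek_trans y k j i : lek y k j -> lek y j i -> lek y k i.
Proof.
move=> /orP[h1|/andP[/eqP e1 l1]] /orP[h2|/andP[/eqP e2 l2]]; apply/orP.
- by left; exact: lt_trans h1 h2.
- by left; rewrite -e2.
- by left; rewrite e1.
- by right; rewrite e1 e2 eqxx /=; exact: leq_trans l1 l2.
Qed.

Lemma lek_anti y j i : lek y j i -> lek y i j -> j = i.
Proof.
move=> /orP[h1|/andP[/eqP e1 l1]] /orP[h2|/andP[/eqP e2 l2]].
- by move: (lt_trans h1 h2); rewrite ltxx.
- by move: h1; rewrite e2 ltxx.
- by move: h2; rewrite e1 ltxx.
- by apply/val_inj/eqP; rewrite /= eqn_leq l1 l2.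
Qed.

Lemma lek_total y j i : lek y j i || lek y i j.
Proof.
rewrite /lek; case: (ltgtP (y j) (y i)) => h //=.
by rewrite leq_total.
Qed.

Lemma rankE y i : rank y i = #|[set j | lek y j i]|.
Proof.
rewrite /rank -sum1_card [RHS]big_mkcond /=; apply: eq_bigr => j _.
by rewrite psi_lek inE; case: lek.
Qed.

Lemma rank_le y j i : lek y j i -> (rank y j <= rank y i)%N.
Proof.
move=> h; rewrite !rankE; apply: subset_leq_card; apply/subsetP => k.
by rewrite !inE => hk; exact: lek_trans hk h.
Qed.

Lemma rank_lt y j i : ~~ lek y j i -> (rank y i < rank y j)%N.
Proof.
move=> h; have hij : lek y i j by move: (lek_total y j i); rewrite (negbTE h).
rewrite !rankE; apply: proper_card; apply/properP; split.
  apply/subsetP => k; rewrite !inE => hk; exact: lek_trans hk hij.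
by exists j; rewrite !inE ?lek_refl.
Qed.

Lemma rank_leE y j i : (rank y j <= rank y i)%N = lek y j i.
Proof.
apply/idP/idP; last exact: rank_le.
move=> h; apply/negPn/negP => /rank_lt; by rewrite ltnNge h.
Qed.

Lemma rank_gt0 y i : (0 < rank y i)%N.
Proof. by rewrite rankE card_gt0; apply/set0Pn; exists i; rewrite inE lek_refl. Qed.

Lemma rank_leqn y i : (rank y i <= n)%N.
Proof. by rewrite rankE -[n in (_ <= n)%N]card_ord max_card. Qed.

Lemma rko_proof y i : ((rank y i).-1 < n)%N.
Proof. have := rank_gt0 y i; have := rank_leqn y i; lia. Qed.

Definition rko y i : 'I_n := Ordinal (rko_proof y i).

Lemma rko_inj y : injective (rko y).
Proof.
move=> j i /(congr1 val) /= e.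
have e' : rank y j = rank y i.
  have := rank_gt0 y i; have := rank_gt0 y j; lia.
apply: (@lek_anti y); rewrite -rank_leE e' leqnn //.
Qed.

Definition rkp y : {perm 'I_n} := perm (@rko_inj y).

Lemma rkpE y i : rank y i = (rkp y i).+1.
Proof. rewrite permE /=; have := rank_gt0 y i; lia. Qed.

Lemma rkp_le y j i : (rkp y j <= rkp y i)%N = lek y j i.
Proof. by rewrite -rank_leE !rkpE. Qed.


Lemma lek_mono (a b : 'I_n -> \bar R) i j :
  (a i <= b i)%E -> (b j <= a j)%E -> lek a j i -> lek b j i.
Proof.
move=> hi hj /orP[h|/andP[/eqP e l]]; apply/orP.
- by left; apply: le_lt_trans hj _; apply: lt_le_trans h hi.
- have : (b j <= b i)%E by apply: le_trans hj _; rewrite e.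
  rewrite le_eqVlt => /orP[/eqP ->|->]; last by left.
  by right; rewrite eqxx l.
Qed.

Lemma card_up y m :
  #|[set i | (m < rank y i)%N]| = #|[set s : 'I_n | (m < s.+1)%N]|.
Proof.
have -> : [set i | (m < rank y i)%N] = rkp y @^-1: [set s : 'I_n | (m < s.+1)%N].
  by apply/setP => i; rewrite !inE rkpE.
by rewrite card_preimset //; exact: perm_inj.
Qed.

Lemma count_mono (z : {set 'I_n}) m (a b : 'I_n -> \bar R)
  (mono : forall i j, i \in z -> j \notin z -> lek a j i -> lek b j i) :
  (#|[set i | (m < rank a i)%N] :&: z| <= #|[set i | (m < rank b i)%N] :&: z|)%N.
Proof.
pose Ua := [set i | (m < rank a i)%N]; pose Ub := [set i | (m < rank b i)%N].
rewrite -/Ua -/Ub.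
have cU : #|Ua| = #|Ub| by rewrite !card_up.
have [sub|] := boolP (Ua :&: z \subset Ub).
  apply: subset_leq_card; apply/subsetP => i hi; rewrite inE (subsetP sub _ hi).
  by move: hi; rewrite inE => /andP[_ ->].
case/subsetPn => i; rewrite inE => /andP[ia iz] ib.
have hD : Ub :\: z \subset Ua :\: z.
  apply/subsetP => j; rewrite !inE => /andP[jz jb]; rewrite jz /=.
  move: ia ib jb; rewrite !inE -leqNgt => ia ib jb.
  have nb : ~~ lek b j i by rewrite -rank_leE -ltnNge; apply: leq_ltn_trans ib jb.
  have na : ~~ lek a j i by apply: contra nb; exact: mono.
  have := rank_lt na; lia.
have := cardsID z Ua; have := cardsID z Ub; have := subset_leq_card hD; move: cU; rewrite -(cardsID z Ua) -(cardsID z Ub). move=> e hle _ _; by rewrite -(leq_add2r #|Ua :\: z|) e leq_add2l.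
Qed.

Lemma phi_abel (phi : nat -> R) r : (r <= n)%N ->
  phi r = phi 0%N + \sum_(m < n | (m < r)%N) (phi m.+1 - phi m).
Proof.
move=> hr.
have := telescope_sumr phi (leq0n r).
rewrite (big_nat_widen 0 r n) // big_mkord => h.
rewrite (_ : \sum_(m < n | (m < r)%N) _ = phi r - phi 0%N).
  by rewrite addrC subrK.
by rewrite -h; apply: eq_bigl.
Qed.

Lemma tR_abel (phi : nat -> R) y z : t_stat false phi z y =
  #|z|%:R * phi 0%N + \sum_(m < n) (phi m.+1 - phi m) *
     #|[set i | (m < rank y i)%N] :&: z|%:R.
Proof.
rewrite /t_stat.
under eq_bigr => i _ do rewrite (phi_abel phi (rank_leqn y i)).
rewrite big_split /= sumr_const; congr (_ + _); first by rewrite mulr_natl.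
rewrite (exchange_big_dep xpredT) //=; apply: eq_bigr => m _.
rewrite (eq_bigl (fun i => i \in [set i | (m < rank y i)%N] :&: z)); last first.
  by move=> i; rewrite !inE andbC.
by rewrite sumr_const mulr_natr.
Qed.

Lemma t_mono mw (phi : nat -> R)
  (phi_mono : {homo phi : a b / (a <= b)%N >-> a <= b})
  (z : {set 'I_n}) (a b : 'I_n -> \bar R)
  (mono : forall i j, i \in z -> j \notin z -> lek a j i -> lek b j i) :
  t_stat mw phi z a <= t_stat mw phi z b.
Proof.
case: mw.
  rewrite /t_stat; apply: ler_sum => i iz; apply: phi_mono.
  apply: leq_sum => j jz; rewrite !psi_lek.
  by case ha: (lek a j i) => //; rewrite (mono i j iz jz ha).
rewrite !tR_abel lerD2l; apply: ler_sum => m _; apply: ler_wpM2l.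
  by rewrite subr_ge0; apply: phi_mono.
by rewrite ler_nat; exact: count_mono.
Qed.


Definition Fstat mw (phi : nat -> R) (S : {set 'I_n}) : R :=
  if mw then \sum_(s in S) phi #|[set s' | (s' \notin S) && (s' <= s)%N]|
  else \sum_(s in S) phi s.+1.

Lemma t_F mw (phi : nat -> R) A y : t_stat mw phi A y = Fstat mw phi (rkp y @: A).
Proof.
have inj : {in A &, injective (rkp y)} by move=> ? ? _ _; exact: perm_inj.
case: mw; rewrite /t_stat /Fstat big_imset //=; apply: eq_bigr => i iA.
  congr phi.
  rewrite -(card_preimset _ (@perm_inj _ (rkp y))).
  have -> : rkp y @^-1: [set s' | (s' \notin rkp y @: A) && (s' <= rkp y i)%N]
      = [set j | (j \notin A) && lek y j i].
    by apply/setP => j; rewrite !inE mem_imset ?rkp_le //; exact: perm_inj.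
  rewrite -sum1_card [RHS]big_mkcond [LHS]big_mkcond /=; apply: eq_bigr => j _.
  by rewrite !inE psi_lek; case: (j \in A); case: lek.
by rewrite rkpE.
Qed.

Lemma t_transfer mw (phi : nat -> R) A y y' :
  t_stat mw phi A y = t_stat mw phi ((rkp y * (rkp y')^-1)%g @: A) y'.
Proof.
rewrite !t_F -imset_comp; congr Fstat; apply: eq_imset => x /=.
by rewrite permM permKV.
Qed.

Lemma cre_le n1 (E E' : pred {set 'I_n}) :
  (forall A : {set 'I_n}, #|A| = n1 -> E A -> E' A) -> cre_prob R n1 E <= cre_prob R n1 E'.
Proof.
move=> h; rewrite /cre_prob ler_wpM2r ?invr_ge0 ?ler0n // ler_nat.
apply: subset_leq_card; apply/subsetP => A; rewrite !inE => /andP[/eqP hA hE].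
by rewrite hA eqxx (h _ hA hE).
Qed.

Lemma cre_perm n1 (f : {set 'I_n} -> {set 'I_n}) (finj : injective f)
  (fcard : forall A : {set 'I_n}, #|f A| = #|A|) (E : pred {set 'I_n}) :
  cre_prob R n1 (fun A => E (f A)) = cre_prob R n1 E.
Proof.
rewrite /cre_prob; congr (_%:R / _).
rewrite -[RHS](card_preimset _ finj); apply: eq_card => A; by rewrite !inE fcard.
Qed.

Lemma valid n1 (T : {set 'I_n} -> R) alpha : 0 <= alpha ->
  cre_prob R n1 (fun w => cre_prob R n1 (fun A => T w <= T A) <= alpha) <= alpha.
Proof.
move=> ha.
pose S := [set w : {set 'I_n} |
  (#|w| == n1) && (cre_prob R n1 (fun A => T w <= T A) <= alpha)].
case: (set_0Vmem S) => [S0 | [w1 w1S]].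
  rewrite /cre_prob (_ : #|_| = 0%N) ?mul0r //.
  by apply/eqP; rewrite cards_eq0 -/S S0.
have [w0 w0S w0min] := arg_minP T w1S.
have h0 : cre_prob R n1 (fun A => T w0 <= T A) <= alpha.
  have w0S' : w0 \in S := w0S.
  by move: w0S'; rewrite /S inE => /andP[].
apply: le_trans h0.
apply: cre_le => A hA hE; apply: w0min.
have : A \in S by rewrite /S inE hA eqxx hE.
done.
Qed.

End Aux.

Theorem theorem1 (R : realType) (n n1 n0 : nat)
  (hn1 : (0 < n1)%N) (hn0 : (0 < n0)%N) (hn : (n1 + n0)%N = n)
  (mw : bool) (phi : nat -> R)
  (phi_mono : {homo phi : a b / (a <= b)%N >-> a <= b})
  (y0 : 'I_n -> R)
  (Y1 Y0 : 'I_n -> R) (M1 M0 : 'I_n -> bool) (delta : 'I_n -> R)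
  (H0 : forall i, Y1 i - Y0 i = delta i)
  (alpha : R) (ha0 : 0 < alpha) (ha1 : alpha < 1) :
  cre_prob R n1
    (fun z => pval_g mw phi n1 y0 Y1 Y0 M1 M0 delta z <= alpha) <= alpha.
Proof.
pose Y0E := (fun i => (Y0 i)%:E) : 'I_n -> \bar R.
pose y0E := (fun i => (y0 i)%:E) : 'I_n -> \bar R.
pose p := (rkp Y0E * (rkp y0E)^-1)%g.
pose T := fun A => t_stat mw phi A y0E.
have key : forall z, t_stat mw phi z (Yg0 Y1 Y0 M1 M0 delta z) <= T (p @: z).
  move=> z; rewrite /T -t_transfer; apply: t_mono => // i j iz jz.
  apply: lek_mono; rewrite /Yg0 /Y0E ?iz ?(negbTE jz).
    case: (M1 i); last exact: leNye.
    by rewrite -H0 opprB addrCA subrr addr0.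
  by case: (M0 j); [exact: lexx | exact: leey].
apply: le_trans (@valid R n n1 T alpha (ltW ha0)).
rewrite -(@cre_perm R n n1 _ (imset_inj (@perm_inj _ p))
   (fun A => card_imset A (@perm_inj _ p))
   (fun w => cre_prob R n1 (fun A => T w <= T A) <= alpha)).
apply: cre_le => z _ h; apply: le_trans h.
rewrite /pval_g /G_stat; apply: cre_le => A _ hA; exact: le_trans (key z) hA.
Qed.
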